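(* Let $A\in\mathbb{R}^{d\times n}$ (with $n>d$) have nonzero columns $a_1,\dots,a_n$, let $S\subset\{1,\dots,n\}$ with $|S|=m$, and let $A_S$ be the $d\times m$ matrix of columns $a_i$, $i\in S$, assumed to have full column rank. Suppose that for every $x_0'\in\mathbb{R}^n$ with support exactly $S$, writing $x'_{\mathrm{opt}}\in\mathbb{R}^m$ for its nonzero entries, we have $|a_j^T(A_S^{+})^T\operatorname{sign}(x'_{\mathrm{opt}})|<1$ for all $j\notin S$. Then $\max_{j\notin S}\|A_S^{+}a_j\|_1<1$.
   Context: $A_S^{+}$ is the Moore–Penrose pseudoinverse of $A_S$; $\operatorname{sign}$ is applied componentwise. *)

(* Defs.v *)
From HB Require Import structures.
From mathcomp Require Import all_boot all_order all_algebra.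
Set Implicit Arguments. Unset Strict Implicit. Unset Printing Implicit Defensive.
Import Order.TTheory GRing.Theory Num.Theory.
Local Open Scope ring_scope.

(* Submatrix A_S of the columns a_i, i in S, listed in increasing order of i
   (enum of a subset of 'I_n is increasing). *)
Definition colsub_set (R : Type) (d n : nat) (A : 'M[R]_(d, n)) (S : {set 'I_n})
  : 'M[R]_(d, #|S|) := \matrix_(i < d, k < #|S|) A i (@enum_val _ (mem S) k).

Definition restr_set (R : Type) (n : nat) (S : {set 'I_n}) (x : 'cV[R]_n)
  : 'cV[R]_#|S| := \col_(k < #|S|) x (@enum_val _ (mem S) k) 0.

Definition is_MP_pinv (R : numFieldType) (p q : nat) (M : 'M[R]_(p, q)) (X : 'M[R]_(q, p)) : Prop :=
  [/\ M *m X *m M = M, X *m M *m X = X, (M *m X)^T = M *m X & (X *m M)^T = X *m M].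

Definition sign_vec (R : numDomainType) (p : nat) (v : 'cV[R]_p) : 'cV[R]_p :=
  map_mx Num.sg v.

Definition l1norm (R : numDomainType) (p : nat) (v : 'cV[R]_p) : R :=
  \sum_(k < p) `|v k 0|.

(* Main.v *)
Require Import Defs.
From HB Require Import structures.
From mathcomp Require Import all_boot all_order all_algebra.
Import Order.TTheory GRing.Theory Num.Theory.
Local Open Scope ring_scope.

Theorem lemma3 (R : realFieldType) (d n : nat) (A : 'M[R]_(d, n)) (S : {set 'I_n})
  (X : 'M[R]_(#|S|, d)) :
  (d < n)%N ->
  (forall j : 'I_n, col j A != 0) ->
  \rank (colsub_set A S) = #|S| ->
  is_MP_pinv (colsub_set A S) X ->
  (forall x0 : 'cV[R]_n,
     (forall i : 'I_n, (x0 i 0 != 0) = (i \in S)) ->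
     forall j : 'I_n, j \notin S ->
       `| ((col j A)^T *m X^T *m sign_vec (restr_set S x0)) 0 0 | < 1) ->
  forall j : 'I_n, j \notin S -> l1norm (X *m col j A) < 1.
Proof.
move=> _ _ _ _ H j jS.
set v := X *m col j A.
pose t (k : 'I_#|S|) : R := if v k 0 == 0 then 1 else Num.sg (v k 0).
have tnz k : t k != 0.
  rewrite /t; case: ifP => [_|/negbT h]; first exact: oner_neq0.
  by rewrite sgr_eq0.
pose x0 : 'cV[R]_n := \col_i
  (match [pick k : 'I_#|S| | @enum_val _ (mem S) k == i] with
   | Some k => t k | None => 0 end).
have Hx0 : forall i, (x0 i 0 != 0) = (i \in S).
  move=> i; rewrite /x0 mxE; case: pickP => [k /eqP <-|h].
    by rewrite tnz enum_valP.
  rewrite eqxx /=; apply/esym/negbTE/negP => iS.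
  by move: (h (enum_rank_in iS i)); rewrite enum_rankK_in // eqxx.
have Hr : restr_set S x0 = \col_k t k.
  apply/matrixP => k l; rewrite !ord1 !mxE.
  case: pickP => [k' /eqP /enum_val_inj -> //|h].
  by move: (h k); rewrite eqxx.
have := H x0 Hx0 j jS.
rewrite Hr -trmx_mul -/v mxE.
clearbody v.
have -> : \sum_j0 (v^T 0 j0 * (sign_vec (\col_k t k)) j0 0) = l1norm v.
  apply: eq_bigr => k _; rewrite !mxE /t.
  case: eqP => [E|_]; first by rewrite E mul0r normr0.
  by rewrite sgr_id mulrC -normrEsg.
move/(le_lt_trans (ler_norm _)) => //.
Qed.
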